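(* Let $3\le d_1\le d_2\le d_3$. In $\mathbb{C}^{d_1}\otimes\mathbb{C}^{d_2}\otimes\mathbb{C}^{d_3}$ consider the following $d_2+2d_3-2$ product states: $|0-i\rangle_1|0\rangle_2|i\rangle_3$ for $1\le i\le d_1-1$; $|i\rangle_1|0-i\rangle_2|0\rangle_3$ for $1\le i\le d_1-1$; $|0\rangle_1|i\rangle_2|0-i\rangle_3$ for $1\le i\le d_2-1$; $|1\rangle_1|0-i\rangle_2|i\rangle_3$ for $d_1\le i\le d_2-1$; $|m_i\rangle_1|1\rangle_2|(i-1)-i\rangle_3$ for $d_2\le i\le d_3-1$, where $m_i=2$ if $i$ is even and $m_i=1$ if $i$ is odd; $|0-2\rangle_1|0-2\rangle_2|i\rangle_3$ for $d_1\le i\le d_3-1$; and the stopper state $|0+1+\cdots+(d_1-1)\rangle_1|0+1+\cdots+(d_2-1)\rangle_2|0+1+\cdots+(d_3-1)\rangle_3$. These states are pairwise orthogonal, and for every party $t\in\{1,2,3\}$, every orthogonality-preserving local POVM element $E_t$ on party $t$ for this set is proportional to the identity. Consequently, this set cannot be perfectly distinguished by LOCC.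
   Context: $\{|i\rangle\}$ is the computational basis; $|i_1\pm i_2\pm\cdots\pm i_r\rangle$ denotes $\frac{1}{\sqrt r}(|i_1\rangle\pm|i_2\rangle\pm\cdots\pm|i_r\rangle)$; subscripts indicate the party; ranges $a\le i\le b$ with $a>b$ are empty. For a set $\{|\psi_a\rangle\}$ of pairwise orthogonal states in $\mathbb{C}^{d_1}\otimes\cdots\otimes\mathbb{C}^{d_n}$, a positive semidefinite operator $E_t$ on $\mathbb{C}^{d_t}$ (a POVM element $M_t^\dagger M_t$ of a measurement by party $t$) is called orthogonality-preserving if $\langle\psi_a|(\mathbb{I}\otimes\cdots\otimes E_t\otimes\cdots\otimes\mathbb{I})|\psi_b\rangle=0$ for all $a\neq b$; the measurement is trivial if all its POVM elements are proportional to the identity. A set of orthogonal states for which every party can only perform trivial orthogonality-preserving measurements cannot be perfectly distinguished by LOCC. *)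

(* Defs.v *)
From HB Require Import structures.
From mathcomp Require Import all_boot all_order all_algebra.
Set Implicit Arguments. Unset Strict Implicit. Unset Printing Implicit Defensive.
Import Order.TTheory GRing.Theory Num.Theory.
Local Open Scope ring_scope.

Section QDefs.
Variable C : numClosedFieldType.

Definition vec (n : nat) := 'I_n -> C.

(* |i> in C^n (i a natural number; the zero vector if i >= n, never used) *)
Definition ket (n i : nat) : vec n := fun k => ((k : nat) == i)%:R.
Arguments ket : clear implicits.

(* |i - j> = (|i> - |j>)/sqrt 2 *)
Definition ketm (n i j : nat) : vec n :=
  fun k => (sqrtC 2)^-1 * (ket n i k - ket n j k).
Arguments ketm : clear implicits.

(* |0 + 1 + ... + (n-1)> = (|0> + ... + |n-1>)/sqrt n *)
Definition ketall (n : nat) : vec n := fun _ => (sqrtC n%:R)^-1.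
Arguments ketall : clear implicits.

Definition vec3 (d1 d2 d3 : nat) := ('I_d1 * 'I_d2 * 'I_d3)%type -> C.

Definition prod3 d1 d2 d3 (u : vec d1) (v : vec d2) (w : vec d3) : vec3 d1 d2 d3 :=
  fun x => u x.1.1 * v x.1.2 * w x.2.

Definition inner3 d1 d2 d3 (psi phi : vec3 d1 d2 d3) : C :=
  \sum_x (psi x)^* * phi x.

Definition act1 d1 d2 d3 (E : 'M[C]_d1) (phi : vec3 d1 d2 d3) : vec3 d1 d2 d3 :=
  fun x => \sum_j E x.1.1 j * phi (j, x.1.2, x.2).
Definition act2 d1 d2 d3 (E : 'M[C]_d2) (phi : vec3 d1 d2 d3) : vec3 d1 d2 d3 :=
  fun x => \sum_j E x.1.2 j * phi (x.1.1, j, x.2).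
Definition act3 d1 d2 d3 (E : 'M[C]_d3) (phi : vec3 d1 d2 d3) : vec3 d1 d2 d3 :=
  fun x => \sum_j E x.2 j * phi (x.1.1, x.1.2, j).

Definition psd n (E : 'M[C]_n) : Prop :=
  forall v : vec n, 0 <= \sum_i \sum_j (v i)^* * E i j * v j.

Definition pairwise_orth d1 d2 d3 (S : seq (vec3 d1 d2 d3)) : Prop :=
  forall a b, (a < size S)%N -> (b < size S)%N -> a <> b ->
    inner3 (nth (fun _ => 0) S a) (nth (fun _ => 0) S b) = 0.

Definition OP1 d1 d2 d3 (S : seq (vec3 d1 d2 d3)) (E : 'M[C]_d1) : Prop :=
  forall a b, (a < size S)%N -> (b < size S)%N -> a <> b ->
    inner3 (nth (fun _ => 0) S a) (act1 E (nth (fun _ => 0) S b)) = 0.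
Definition OP2 d1 d2 d3 (S : seq (vec3 d1 d2 d3)) (E : 'M[C]_d2) : Prop :=
  forall a b, (a < size S)%N -> (b < size S)%N -> a <> b ->
    inner3 (nth (fun _ => 0) S a) (act2 E (nth (fun _ => 0) S b)) = 0.
Definition OP3 d1 d2 d3 (S : seq (vec3 d1 d2 d3)) (E : 'M[C]_d3) : Prop :=
  forall a b, (a < size S)%N -> (b < size S)%N -> a <> b ->
    inner3 (nth (fun _ => 0) S a) (act3 E (nth (fun _ => 0) S b)) = 0.

(* indices a <= i <= b (empty if a > b) *)
Definition rng (a b : nat) : seq nat := iota a (b.+1 - a).

Definition lemma4_states (d1 d2 d3 : nat) : seq (vec3 d1 d2 d3) :=
  [seq prod3 (ketm d1 0 i) (ket d2 0) (ket d3 i) | i <- rng 1 d1.-1] ++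
  [seq prod3 (ket d1 i) (ketm d2 0 i) (ket d3 0) | i <- rng 1 d1.-1] ++
  [seq prod3 (ket d1 0) (ket d2 i) (ketm d3 0 i) | i <- rng 1 d2.-1] ++
  [seq prod3 (ket d1 1) (ketm d2 0 i) (ket d3 i) | i <- rng d1 d2.-1] ++
  [seq prod3 (ket d1 (if odd i then 1 else 2)) (ket d2 1) (ketm d3 i.-1 i)
     | i <- rng d2 d3.-1] ++
  [seq prod3 (ketm d1 0 2) (ketm d2 0 2) (ket d3 i) | i <- rng d1 d3.-1] ++
  [:: prod3 (ketall d1) (ketall d2) (ketall d3)].

End QDefs.
Arguments ket : clear implicits.
Arguments ketm : clear implicits.
Arguments ketall : clear implicits.
Arguments lemma4_states : clear implicits.

(* Main.v *)
Require Import Defs.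
From HB Require Import structures.
From mathcomp Require Import all_boot all_order all_algebra.
From mathcomp Require Import zify ring.
Import Order.TTheory GRing.Theory Num.Theory.
Local Open Scope ring_scope.
Set Implicit Arguments. Unset Strict Implicit.

Section Basics.
Variable C : numClosedFieldType.

Definition isreal n (u : vec C n) := forall k, (u k)^* = u k.
Definition ip n (u v : vec C n) : C := \sum_k u k * v k.
Definition bf n (E : 'M[C]_n) (u v : vec C n) : C :=
  \sum_i \sum_j u i * E i j * v j.

Definition s2 : C := (sqrtC 2)^-1.
Definition rn n : C := (sqrtC n%:R)^-1.

Lemma s2_real : s2^* = s2.
Proof. by rewrite /s2 fmorphV; congr (_^-1); apply: geC0_conj; rewrite sqrtC_ge0 ler0n. Qed.
Lemma rn_real n : (rn n)^* = rn n.
Proof. by rewrite /rn fmorphV; congr (_^-1); apply: geC0_conj; rewrite sqrtC_ge0 ler0n. Qed.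

Lemma isreal_ket n i : isreal (ket C n i).
Proof. by move=> k; rewrite /ket conjC_nat. Qed.
Lemma isreal_ketm n i j : isreal (ketm C n i j).
Proof.
move=> k; rewrite /ketm /ket rmorphM rmorphB /= !conjC_nat.
by rewrite -/s2 s2_real.
Qed.
Lemma isreal_ketall n : isreal (ketall C n).
Proof. by move=> k; rewrite /ketall -/(rn n) rn_real. Qed.

Lemma sum_pair (T1 T2 : finType) (f : T1 * T2 -> C) :
  \sum_x f x = \sum_i \sum_j f (i, j).
Proof. by rewrite pair_bigA; apply: eq_bigr => -[]. Qed.

Lemma sum3 (T1 T2 T3 : finType) (f : T1 * T2 * T3 -> C) :
  \sum_x f x = \sum_i \sum_j \sum_k f (i, j, k).
Proof.
rewrite sum_pair (sum_pair (fun p => \sum_k f (p, k))); apply: eq_bigr => i _.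
by apply: eq_bigr.
Qed.

Lemma prod3_sum n1 n2 n3 (a : 'I_n1 -> C) (b : 'I_n2 -> C) (c : 'I_n3 -> C) :
  (\sum_i a i) * (\sum_j b j) * (\sum_k c k) = \sum_i \sum_j \sum_k (a i * b j * c k).
Proof.
rewrite -mulrA big_distrl /=; apply: eq_bigr => i _.
rewrite big_distrl big_distrr /=; apply: eq_bigr => j _.
rewrite big_distrr /= big_distrr /=; apply: eq_bigr => k _; ring.
Qed.

Lemma inner3_prod d1 d2 d3 (u1 v1 : vec C d1) (u2 v2 : vec C d2) (u3 v3 : vec C d3) :
  isreal u1 -> isreal u2 -> isreal u3 ->
  inner3 (prod3 u1 u2 u3) (prod3 v1 v2 v3) = ip u1 v1 * ip u2 v2 * ip u3 v3.
Proof.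
move=> r1 r2 r3; rewrite /inner3 /prod3 /ip.
rewrite sum3 prod3_sum; apply: eq_bigr => i _; apply: eq_bigr => j _; apply: eq_bigr => k _.
rewrite !rmorphM /= r1 r2 r3; ring.
Qed.

Lemma inner3_act1 d1 d2 d3 (E : 'M[C]_d1) (u1 v1 : vec C d1) (u2 v2 : vec C d2) (u3 v3 : vec C d3) :
  isreal u1 -> isreal u2 -> isreal u3 ->
  inner3 (prod3 u1 u2 u3) (act1 E (prod3 v1 v2 v3)) = bf E u1 v1 * ip u2 v2 * ip u3 v3.
Proof.
move=> r1 r2 r3; rewrite /inner3 /prod3 /ip /bf /act1.
rewrite sum3 prod3_sum; apply: eq_bigr => i _; apply: eq_bigr => j _; apply: eq_bigr => k _.
rewrite !rmorphM /= r1 r2 r3 /= !(big_distrr, big_distrl) /=; apply: eq_bigr => l _.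
ring.
Qed.

Lemma inner3_act2 d1 d2 d3 (E : 'M[C]_d2) (u1 v1 : vec C d1) (u2 v2 : vec C d2) (u3 v3 : vec C d3) :
  isreal u1 -> isreal u2 -> isreal u3 ->
  inner3 (prod3 u1 u2 u3) (act2 E (prod3 v1 v2 v3)) = ip u1 v1 * bf E u2 v2 * ip u3 v3.
Proof.
move=> r1 r2 r3; rewrite /inner3 /prod3 /ip /bf /act2.
rewrite sum3 prod3_sum; apply: eq_bigr => i _; apply: eq_bigr => j _; apply: eq_bigr => k _.
rewrite !rmorphM /= r1 r2 r3 /= !(big_distrr, big_distrl) /=; apply: eq_bigr => l _.
ring.
Qed.

Lemma inner3_act3 d1 d2 d3 (E : 'M[C]_d3) (u1 v1 : vec C d1) (u2 v2 : vec C d2) (u3 v3 : vec C d3) :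
  isreal u1 -> isreal u2 -> isreal u3 ->
  inner3 (prod3 u1 u2 u3) (act3 E (prod3 v1 v2 v3)) = ip u1 v1 * ip u2 v2 * bf E u3 v3.
Proof.
move=> r1 r2 r3; rewrite /inner3 /prod3 /ip /bf /act3.
rewrite sum3 prod3_sum; apply: eq_bigr => i _; apply: eq_bigr => j _; apply: eq_bigr => k _.
rewrite !rmorphM /= r1 r2 r3 /= !(big_distrr, big_distrl) /=; apply: eq_bigr => l _.
ring.
Qed.


Lemma sum_delta n i (G : nat -> C) :
  \sum_(k < n) ((k : nat) == i)%:R * G k = if (i < n)%N then G i else 0.
Proof.
elim: n => [|n IH]; first by rewrite big_ord0.
rewrite big_ord_recr /= IH.
case: (ltnP i n) => H.
- have -> : (i < n.+1)%N by lia.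
  have -> : (n == i) = false by lia.
  by rewrite mul0r addr0.
- case: (eqVneq n i) => [->|ne]; first by rewrite ltnS leqnn mul1r add0r.
  have -> : (i < n.+1)%N = false by lia.
  by rewrite mul0r addr0.
Qed.

Lemma sum_ord_delta n (a : 'I_n) (F : 'I_n -> C) :
  \sum_(i : 'I_n) ((i : nat) == a)%:R * F i = F a.
Proof.
rewrite (bigD1 a) //= eqxx mul1r big1 ?addr0 // => i ne.
have -> : ((i : nat) == a) = false by apply/negbTE.
by rewrite mul0r.
Qed.

Lemma ipC n (u v : vec C n) : ip u v = ip v u.
Proof. by apply: eq_bigr => k _; rewrite mulrC. Qed.

Lemma ip_kk n i j : ip (ket C n i) (ket C n j) =
  if (i < n)%N then (if i == j then 1 else 0) else 0.
Proof.
rewrite /ip /ket (eq_bigr (fun k : 'I_n => ((k : nat) == i)%:R * ((k : nat) == j)%:R)) //.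
rewrite (sum_delta n i (fun k => (k == j)%:R)).
by case: (i < n)%N => //; case: (i == j).
Qed.

Lemma ip_ka n i : ip (ket C n i) (ketall C n) = if (i < n)%N then rn n else 0.
Proof.
rewrite /ip /ket /ketall (sum_delta n i (fun k => rn n)) //.
Qed.

Lemma ip_ak n i : ip (ketall C n) (ket C n i) = if (i < n)%N then rn n else 0.
Proof. by rewrite ipC ip_ka. Qed.

Lemma ip_mL n i j v : ip (ketm C n i j) v = s2 * (ip (ket C n i) v - ip (ket C n j) v).
Proof.
rewrite /ip /ketm -sumrB big_distrr /=; apply: eq_bigr => k _.
rewrite /s2; ring.
Qed.

Lemma ip_mR n i j u : ip u (ketm C n i j) = s2 * (ip u (ket C n i) - ip u (ket C n j)).
Proof. by rewrite ipC ip_mL !(ipC (ket C n _)). Qed.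

Lemma bf_mL n (E : 'M[C]_n) i j v :
  bf E (ketm C n i j) v = s2 * (bf E (ket C n i) v - bf E (ket C n j) v).
Proof.
rewrite /bf /ketm -sumrB big_distrr /=; apply: eq_bigr => k _.
rewrite -sumrB big_distrr /=; apply: eq_bigr => l _.
rewrite /s2; ring.
Qed.

Lemma bf_mR n (E : 'M[C]_n) i j u :
  bf E u (ketm C n i j) = s2 * (bf E u (ket C n i) - bf E u (ket C n j)).
Proof.
rewrite /bf /ketm -sumrB big_distrr /=; apply: eq_bigr => k _.
rewrite -sumrB big_distrr /=; apply: eq_bigr => l _.
rewrite /s2; ring.
Qed.

Lemma bf_aL n (E : 'M[C]_n) v :
  bf E (ketall C n) v = rn n * \sum_(k < n) bf E (ket C n k) v.
Proof.
rewrite /bf big_distrr /=; apply: eq_bigr => k _.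
rewrite /ket [in RHS](eq_bigr (fun i : 'I_n => ((i : nat) == k)%:R *
   (\sum_j E i j * v j))); last first.
  by move=> i _; rewrite big_distrr /=; apply: eq_bigr => j _; ring.
rewrite sum_ord_delta big_distrr /=; apply: eq_bigr => j _.
rewrite /ketall /rn; ring.
Qed.

Lemma bf_entry n (E : 'M[C]_n) (a b : 'I_n) : bf E (ket C n a) (ket C n b) = E a b.
Proof.
rewrite /bf /ket (eq_bigr (fun i : 'I_n => ((i : nat) == a)%:R *
   (\sum_(j : 'I_n) ((j : nat) == b)%:R * E i j))); last first.
  by move=> i _; rewrite big_distrr /=; apply: eq_bigr => j _; ring.
by rewrite sum_ord_delta sum_ord_delta.
Qed.

Lemma s2_neq0 : s2 != 0.
Proof. by rewrite /s2 invr_eq0 sqrtC_eq0 pnatr_eq0. Qed.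
Lemma rn_neq0 n : (0 < n)%N -> rn n != 0.
Proof. by move=> n0; rewrite /rn invr_eq0 sqrtC_eq0 pnatr_eq0 -lt0n. Qed.

End Basics.

Section Sums.
Variable C : numClosedFieldType.
Lemma sum_single n (F : nat -> C) a : (a < n)%N ->
  (forall k, (k < n)%N -> k != a -> F k = 0) -> \sum_(k < n) F k = F a.
Proof.
move=> an H; rewrite (bigD1 (Ordinal an)) //= big1 ?addr0 // => k ka.
by apply: H => //; apply: contra ka => /eqP E; apply/eqP/val_inj.
Qed.

Lemma canc1 (x a b : C) : a != 0 -> b != 0 -> x * a * b = 0 -> x = 0.
Proof. by move=> a0 b0 /eqP; rewrite !mulf_eq0 (negbTE a0) (negbTE b0) !orbF => /eqP. Qed.
Lemma canc2 (x a b : C) : a != 0 -> b != 0 -> a * x * b = 0 -> x = 0.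
Proof. by move=> a0 b0 /eqP; rewrite !mulf_eq0 (negbTE a0) (negbTE b0) /= orbF => /eqP. Qed.
Lemma canc3 (x a b : C) : a != 0 -> b != 0 -> a * b * x = 0 -> x = 0.
Proof. by move=> a0 b0 /eqP; rewrite !mulf_eq0 (negbTE a0) (negbTE b0) /= => /eqP. Qed.
End Sums.
Lemma s2_eq0F (C : numClosedFieldType) : (s2 C == 0) = false.
Proof. exact/negbTE/s2_neq0. Qed.
Lemma rn_eq0F (C : numClosedFieldType) n : (0 < n)%N -> (rn C n == 0) = false.
Proof. by move=> n0; apply/negbTE/rn_neq0. Qed.

Lemma eqT_nat (x y : nat) : x = y -> (x == y) = true.
Proof. by move=> ->; rewrite eqxx. Qed.
Lemma eqF_nat (x y : nat) : x <> y -> (x == y) = false.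
Proof. by move/eqP/negbTE. Qed.
Lemma ltT_nat (x y : nat) : (x < y)%N -> (x < y)%N = true.
Proof. by []. Qed.
Lemma ltF_nat (x y : nat) : ~~ (x < y)%N -> (x < y)%N = false.
Proof. by move/negbTE. Qed.

Lemma mem_tag (k l : nat) i (s : seq nat) :
  ((k, i) \in [seq (l, j) | j <- s]) = (k == l) && (i \in s).
Proof.
apply/mapP/andP => [[j js [-> ->]]|[/eqP -> Hi]]; first by rewrite eqxx.
by exists i.
Qed.

Section Tags.
Variable C : numClosedFieldType.
Variables d1 d2 d3 : nat.
Local Open Scope nat_scope.

Definition st (p : nat * nat) : vec3 C d1 d2 d3 :=
  let (k, i) := p in
  match k with
  | 0 => prod3 (ketm C d1 0 i) (ket C d2 0) (ket C d3 i)
  | 1 => prod3 (ket C d1 i) (ketm C d2 0 i) (ket C d3 0)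
  | 2 => prod3 (ket C d1 0) (ket C d2 i) (ketm C d3 0 i)
  | 3 => prod3 (ket C d1 1) (ketm C d2 0 i) (ket C d3 i)
  | 4 => prod3 (ket C d1 (if odd i then 1 else 2)) (ket C d2 1) (ketm C d3 i.-1 i)
  | 5 => prod3 (ketm C d1 0 2) (ketm C d2 0 2) (ket C d3 i)
  | _ => prod3 (ketall C d1) (ketall C d2) (ketall C d3)
  end.

Definition T : seq (nat * nat) :=
  [seq (0, i) | i <- rng 1 d1.-1] ++ [seq (1, i) | i <- rng 1 d1.-1] ++
  [seq (2, i) | i <- rng 1 d2.-1] ++ [seq (3, i) | i <- rng d1 d2.-1] ++
  [seq (4, i) | i <- rng d2 d3.-1] ++ [seq (5, i) | i <- rng d1 d3.-1] ++
  [:: (6, 0)].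

Lemma S_eq : lemma4_states C d1 d2 d3 = map st T.
Proof. by rewrite /T !map_cat -!map_comp. Qed.

Lemma memT_cases k i : (k, i) \in T ->
  (k = 0 /\ (1 <= i <= d1.-1)%N) \/ (k = 1 /\ (1 <= i <= d1.-1)%N) \/
  (k = 2 /\ (1 <= i <= d2.-1)%N) \/ (k = 3 /\ (d1 <= i <= d2.-1)%N) \/
  (k = 4 /\ (d2 <= i <= d3.-1)%N) \/ (k = 5 /\ (d1 <= i <= d3.-1)%N) \/
  (k = 6 /\ i = 0).
Proof.
rewrite /T /rng !mem_cat !mem_tag !mem_iota inE xpair_eqE.
case/orP=> [/andP[/eqP-> H]|/orP[/andP[/eqP-> H]|/orP[/andP[/eqP-> H]|/orP[/andP[/eqP-> H]|/orP[/andP[/eqP-> H]|/orP[/andP[/eqP-> H]|/andP[/eqP-> /eqP->]]]]]]].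
all: by do ?[left; split=> //; lia | right]; split=> //; lia.
Qed.

Lemma uniqT : uniq T.
Proof.
have U (k : nat) s : uniq s -> uniq [seq (k, i) | i <- s :> seq nat].
  by move=> us; rewrite map_inj_uniq // => x y [].
have D2 (k l : nat) s j : k != l -> ((l, j) \in [seq (k, i) | i <- s :> seq nat]) = false.
  by move=> kl; apply/mapP => -[i _ [E _]]; move: kl; rewrite E eqxx.
have D (k l : nat) s t : k != l -> has (mem [seq (k, i) | i <- s :> seq nat]) [seq (l, i) | i <- t :> seq nat] = false.
  move=> kl; apply/negbTE/hasPn => -[a b] /mapP [j _ [-> ->]].
  by rewrite /= D2.
rewrite /T /rng.
by rewrite !cat_uniq !has_cat !U ?iota_uniq //= !D // !D2.
Qed.


Lemma nth_S a : (a < size T)%N ->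
  nth (fun _ => 0%R) (lemma4_states C d1 d2 d3) a = st (nth (0, 0)%N T a).
Proof.
move=> Ha; rewrite S_eq (set_nth_default (st (0, 0)%N)) ?size_map //.
by rewrite (nth_map (0, 0)%N).
Qed.

Lemma OP_tags (P : vec3 C d1 d2 d3 -> vec3 C d1 d2 d3 -> Prop) :
  (forall a b, (a < size (lemma4_states C d1 d2 d3))%N ->
     (b < size (lemma4_states C d1 d2 d3))%N -> a <> b ->
     P (nth (fun _ => 0%R) (lemma4_states C d1 d2 d3) a)
       (nth (fun _ => 0%R) (lemma4_states C d1 d2 d3) b)) ->
  forall p q, p \in T -> q \in T -> p <> q -> P (st p) (st q).
Proof.
move=> H p q pT qT pq.
have Hp : (index p T < size T)%N by rewrite index_mem.
have Hq : (index q T < size T)%N by rewrite index_mem.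
have := H (index p T) (index q T); rewrite S_eq size_map -S_eq.
rewrite !nth_S // !nth_index //; apply=> // E.
by apply: pq; rewrite -(nth_index (0, 0)%N pT) E nth_index.
Qed.

Lemma orth_tags :
  (forall p q, p \in T -> q \in T -> p <> q -> inner3 (st p) (st q) = 0%R) ->
  pairwise_orth (lemma4_states C d1 d2 d3).
Proof.
move=> H a b; rewrite S_eq size_map -S_eq => Ha Hb ab.
rewrite !nth_S //; apply: H; rewrite ?mem_nth //.
by move/eqP; rewrite nth_uniq ?uniqT //; move/eqP.
Qed.

End Tags.
Ltac dec1 :=
  match goal with
  | |- context [ odd ?x ] => case: (boolP (odd x)) => ?
  | |- context [ @eq_op _ ?x ?y ] =>
      first [ rewrite (@eqT_nat x y); [| lia]
            | rewrite (@eqF_nat x y); [| lia]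
            | case: (eqVneq x y) => ? ]
  | |- context [ (?x < ?y)%N ] =>
      first [ rewrite (@ltT_nat x y); [| lia]
            | rewrite (@ltF_nat x y); [| lia]
            | case: (ltnP x y) => ? ]
  end; cbv beta iota.
Ltac dec := repeat dec1.
Ltac real_tac := by [apply: isreal_ket | apply: isreal_ketm | apply: isreal_ketall].

Section Orth.
Variable C : numClosedFieldType.
Variables d1 d2 d3 : nat.
Hypotheses (h1 : (3 <= d1)%N) (h12 : (d1 <= d2)%N) (h23 : (d2 <= d3)%N).

Lemma orth p q : p \in T d1 d2 d3 -> q \in T d1 d2 d3 -> p <> q ->
  inner3 (@st C d1 d2 d3 p) (@st C d1 d2 d3 q) = 0.
Proof.
move: p q => [k i] [l j] /memT_cases Hp /memT_cases Hq pq.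
have {pq} pq' : (k != l) || (i != j).
  case: (eqVneq k l) => [E|//]; case: (eqVneq i j) => [E'|//].
  by case: pq; rewrite E E'.
move: pq'; case: Hp => [[-> Hi]|[[-> Hi]|[[-> Hi]|[[-> Hi]|[[-> Hi]|[[-> Hi]|[-> ->]]]]]]];
case: Hq => [[-> Hj]|[[-> Hj]|[[-> Hj]|[[-> Hj]|[[-> Hj]|[[-> Hj]|[-> ->]]]]]]]; move=> pq';
  try (by move: pq'; rewrite /= ?eqxx);
  cbv beta iota delta [st];
  rewrite inner3_prod; try real_tac;
  rewrite ?(ip_mL, ip_mR, ip_kk, ip_ka, ip_ak);
  dec; try ring.
Qed.
End Orth.
Ltac memtac := rewrite /T /rng !mem_cat !mem_tag !mem_iota ?inE ?eqxx ?orbT //=; lia.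
Ltac neqtac := let E := fresh in move=> E; case: E => *; lia.
Ltac nz := rewrite ?(subr0, sub0r, subrr, mulr0, mul0r, mulr1, mul1r, addr0, add0r, mulrN, mulNr, opprK);
  rewrite -?mulr2n ?mulf_eq0 ?mulrn_eq0 ?oppr_eq0 ?s2_eq0F ?oner_eq0 ?rn_eq0F //=; try lia.
Ltac prep := cbv beta iota delta [st];
  rewrite ?inner3_act1 ?inner3_act2 ?inner3_act3; try real_tac;
  rewrite ?bf_mR ?bf_mL ?bf_aL ?ip_mL ?ip_mR ?ip_kk ?ip_ka ?ip_ak; dec.

Section P1.
Variable C : numClosedFieldType.
Variables d1 d2 d3 : nat.
Hypotheses (h1 : (3 <= d1)%N) (h12 : (d1 <= d2)%N) (h23 : (d2 <= d3)%N).
Variable E : 'M[C]_d1.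
Hypothesis H : forall p q, p \in T d1 d2 d3 -> q \in T d1 d2 d3 -> p <> q ->
  inner3 (@st C d1 d2 d3 p) (act1 E (@st C d1 d2 d3 q)) = 0.

Lemma p1_BB i j : (1 <= i <= d1.-1)%N -> (1 <= j <= d1.-1)%N -> i != j ->
  bf E (ket C d1 i) (ket C d1 j) = 0.
Proof.
move=> Hi Hj ij.
move: (@H (1, i)%N (1, j)%N ltac:(memtac) ltac:(memtac) ltac:(neqtac)).
prep.
by apply: canc1; nz.
Qed.

Lemma p1_BC i : (1 <= i <= d1.-1)%N -> bf E (ket C d1 i) (ket C d1 0) = 0.
Proof.
move=> Hi; move: (@H (1, i)%N (2, i)%N ltac:(memtac) ltac:(memtac) ltac:(neqtac)).
prep; by apply: canc1; nz.
Qed.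

Lemma p1_CB i : (1 <= i <= d1.-1)%N -> bf E (ket C d1 0) (ket C d1 i) = 0.
Proof.
move=> Hi; move: (@H (2, i)%N (1, i)%N ltac:(memtac) ltac:(memtac) ltac:(neqtac)).
prep; by apply: canc1; nz.
Qed.

Lemma p1_off i j : (i < d1)%N -> (j < d1)%N -> i != j -> bf E (ket C d1 i) (ket C d1 j) = 0.
Proof.
move=> Hi Hj ij.
case: (posnP i) => [i0|ip]; first by subst i; apply: p1_CB; lia.
case: (posnP j) => [j0|jp]; first by subst j; apply: p1_BC; lia.
apply: p1_BB => //; lia.
Qed.

Lemma p1_diag i : (i < d1)%N -> bf E (ket C d1 i) (ket C d1 i) = bf E (ket C d1 0) (ket C d1 0).
Proof.
move=> Hi; case: (posnP i) => [->//|ip].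
move: (@H (6, 0)%N (0, i)%N ltac:(memtac) ltac:(memtac) ltac:(neqtac)).
prep; move/canc1 => /(_ ltac:(nz) ltac:(nz)).
rewrite (@sum_single C d1 (fun k => bf E (ket C d1 k) (ket C d1 0)) 0%N);
  [|lia|by move=> k kd k0; apply: p1_off => //; lia].
rewrite (@sum_single C d1 (fun k => bf E (ket C d1 k) (ket C d1 i)) i);
  [|lia|by move=> k kd k0; apply: p1_off => //; lia].
move/eqP; rewrite mulf_eq0 (negbTE (s2_neq0 C)) /= -mulrBr mulf_eq0 (negbTE (rn_neq0 C _)) /=; last lia.
by rewrite subr_eq0 => /eqP.
Qed.

Lemma p1_main : exists c : C, E = c%:M.
Proof.
exists (bf E (ket C d1 0) (ket C d1 0)); apply/matrixP => a b.
rewrite mxE -bf_entry; case: (eqVneq a b) => [<-|ab] /=.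
  by rewrite mulr1n p1_diag.
rewrite mulr0n p1_off //; apply: contra ab => /eqP E'; apply/eqP/val_inj.
Qed.
End P1.

Section P2.
Variable C : numClosedFieldType.
Variables d1 d2 d3 : nat.
Hypotheses (h1 : (3 <= d1)%N) (h12 : (d1 <= d2)%N) (h23 : (d2 <= d3)%N).
Variable E : 'M[C]_d2.
Hypothesis H : forall p q, p \in T d1 d2 d3 -> q \in T d1 d2 d3 -> p <> q ->
  inner3 (@st C d1 d2 d3 p) (act2 E (@st C d1 d2 d3 q)) = 0.

Lemma p2_CC i j : (1 <= i <= d2.-1)%N -> (1 <= j <= d2.-1)%N -> i != j ->
  bf E (ket C d2 i) (ket C d2 j) = 0.
Proof.
move=> Hi Hj ij; move: (@H (2, i)%N (2, j)%N ltac:(memtac) ltac:(memtac) ltac:(neqtac)).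
prep; by apply: canc2; nz.
Qed.

Lemma p2_AC i : (1 <= i <= d1.-1)%N -> bf E (ket C d2 0) (ket C d2 i) = 0.
Proof.
move=> Hi; move: (@H (0, i)%N (2, i)%N ltac:(memtac) ltac:(memtac) ltac:(neqtac)).
prep; by apply: canc2; nz.
Qed.

Lemma p2_CA i : (1 <= i <= d1.-1)%N -> bf E (ket C d2 i) (ket C d2 0) = 0.
Proof.
move=> Hi; move: (@H (2, i)%N (0, i)%N ltac:(memtac) ltac:(memtac) ltac:(neqtac)).
prep; by apply: canc2; nz.
Qed.

Lemma p2_CG i : (d1 <= i <= d2.-1)%N -> bf E (ket C d2 i) (ket C d2 0) = 0.
Proof.
move=> Hi; move: (@H (2, i)%N (5, i)%N ltac:(memtac) ltac:(memtac) ltac:(neqtac)).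
prep; move/canc2 => /(_ ltac:(nz) ltac:(nz)).
rewrite (@p2_CC i 2) ?subr0; [|lia|lia|lia].
by move/eqP; rewrite mulf_eq0 (negbTE (s2_neq0 C)) /= => /eqP.
Qed.

Lemma p2_GC i : (d1 <= i <= d2.-1)%N -> bf E (ket C d2 0) (ket C d2 i) = 0.
Proof.
move=> Hi; move: (@H (5, i)%N (2, i)%N ltac:(memtac) ltac:(memtac) ltac:(neqtac)).
prep; move/canc2 => /(_ ltac:(nz) ltac:(nz)).
rewrite (@p2_CC 2 i) ?subr0; [|lia|lia|lia].
by move/eqP; rewrite mulf_eq0 (negbTE (s2_neq0 C)) /= => /eqP.
Qed.

Lemma p2_off i j : (i < d2)%N -> (j < d2)%N -> i != j -> bf E (ket C d2 i) (ket C d2 j) = 0.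
Proof.
move=> Hi Hj ij.
case: (posnP i) => [i0|ip].
  subst i; case: (ltnP j d1) => jd; [apply: p2_AC|apply: p2_GC]; lia.
case: (posnP j) => [j0|jp].
  subst j; case: (ltnP i d1) => id; [apply: p2_CA|apply: p2_CG]; lia.
apply: p2_CC => //; lia.
Qed.

Lemma p2_diag i : (i < d2)%N -> bf E (ket C d2 i) (ket C d2 i) = bf E (ket C d2 0) (ket C d2 0).
Proof.
move=> Hi; case: (posnP i) => [->//|ip].
have HH : s2 C * (rn C d2 * bf E (ket C d2 0) (ket C d2 0) -
                  rn C d2 * bf E (ket C d2 i) (ket C d2 i)) = 0.
  case: (ltnP i d1) => id.
    move: (@H (6, 0)%N (1, i)%N ltac:(memtac) ltac:(memtac) ltac:(neqtac)).
    prep; move/canc2 => /(_ ltac:(nz) ltac:(nz)).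
    rewrite (@sum_single C d2 (fun k => bf E (ket C d2 k) (ket C d2 0)) 0%N);
      [|lia|by move=> k kd k0; apply: p2_off => //; lia].
    by rewrite (@sum_single C d2 (fun k => bf E (ket C d2 k) (ket C d2 i)) i);
      [|lia|by move=> k kd k0; apply: p2_off => //; lia].
  move: (@H (6, 0)%N (3, i)%N ltac:(memtac) ltac:(memtac) ltac:(neqtac)).
  prep; move/canc2 => /(_ ltac:(nz) ltac:(nz)).
  rewrite (@sum_single C d2 (fun k => bf E (ket C d2 k) (ket C d2 0)) 0%N);
    [|lia|by move=> k kd k0; apply: p2_off => //; lia].
  by rewrite (@sum_single C d2 (fun k => bf E (ket C d2 k) (ket C d2 i)) i);
    [|lia|by move=> k kd k0; apply: p2_off => //; lia].
move/eqP: HH; rewrite mulf_eq0 (negbTE (s2_neq0 C)) /= -mulrBr mulf_eq0 (negbTE (rn_neq0 C _)) /=; last lia.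
by rewrite subr_eq0 => /eqP.
Qed.

Lemma p2_main : exists c : C, E = c%:M.
Proof.
exists (bf E (ket C d2 0) (ket C d2 0)); apply/matrixP => a b.
rewrite mxE -bf_entry; case: (eqVneq a b) => [<-|ab] /=.
  by rewrite mulr1n p2_diag.
rewrite mulr0n p2_off //; apply: contra ab => /eqP E'; apply/eqP/val_inj.
Qed.
End P2.

Section P3.
Variable C : numClosedFieldType.
Variables d1 d2 d3 : nat.
Hypotheses (h1 : (3 <= d1)%N) (h12 : (d1 <= d2)%N) (h23 : (d2 <= d3)%N).
Variable E : 'M[C]_d3.
Hypothesis H : forall p q, p \in T d1 d2 d3 -> q \in T d1 d2 d3 -> p <> q ->
  inner3 (@st C d1 d2 d3 p) (act3 E (@st C d1 d2 d3 q)) = 0.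

Lemma p3_AA i j : (1 <= i <= d1.-1)%N -> (1 <= j <= d1.-1)%N -> i != j ->
  bf E (ket C d3 i) (ket C d3 j) = 0.
Proof.
move=> Hi Hj ij; move: (@H (0, i)%N (0, j)%N ltac:(memtac) ltac:(memtac) ltac:(neqtac)).
prep; by apply: canc3; nz.
Qed.

Lemma p3_GG i j : (d1 <= i <= d3.-1)%N -> (d1 <= j <= d3.-1)%N -> i != j ->
  bf E (ket C d3 i) (ket C d3 j) = 0.
Proof.
move=> Hi Hj ij; move: (@H (5, i)%N (5, j)%N ltac:(memtac) ltac:(memtac) ltac:(neqtac)).
prep; by apply: canc3; nz.
Qed.

Lemma p3_AG i j : (1 <= i <= d1.-1)%N -> (d1 <= j <= d3.-1)%N ->
  bf E (ket C d3 i) (ket C d3 j) = 0.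
Proof.
move=> Hi Hj; move: (@H (0, i)%N (5, j)%N ltac:(memtac) ltac:(memtac) ltac:(neqtac)).
prep; by apply: canc3; nz.
Qed.

Lemma p3_GA i j : (1 <= i <= d1.-1)%N -> (d1 <= j <= d3.-1)%N ->
  bf E (ket C d3 j) (ket C d3 i) = 0.
Proof.
move=> Hi Hj; move: (@H (5, j)%N (0, i)%N ltac:(memtac) ltac:(memtac) ltac:(neqtac)).
prep; by apply: canc3; nz.
Qed.

Lemma p3_AB i : (1 <= i <= d1.-1)%N -> bf E (ket C d3 i) (ket C d3 0) = 0.
Proof.
move=> Hi; move: (@H (0, i)%N (1, i)%N ltac:(memtac) ltac:(memtac) ltac:(neqtac)).
prep; by apply: canc3; nz.
Qed.

Lemma p3_BA i : (1 <= i <= d1.-1)%N -> bf E (ket C d3 0) (ket C d3 i) = 0.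
Proof.
move=> Hi; move: (@H (1, i)%N (0, i)%N ltac:(memtac) ltac:(memtac) ltac:(neqtac)).
prep; by apply: canc3; nz.
Qed.

Lemma p3_GB i : (d1 <= i <= d3.-1)%N -> bf E (ket C d3 i) (ket C d3 0) = 0.
Proof.
move=> Hi; move: (@H (5, i)%N (1, 2)%N ltac:(memtac) ltac:(memtac) ltac:(neqtac)).
prep; by apply: canc3; nz.
Qed.

Lemma p3_BG i : (d1 <= i <= d3.-1)%N -> bf E (ket C d3 0) (ket C d3 i) = 0.
Proof.
move=> Hi; move: (@H (1, 2)%N (5, i)%N ltac:(memtac) ltac:(memtac) ltac:(neqtac)).
prep; by apply: canc3; nz.
Qed.

Lemma p3_off i j : (i < d3)%N -> (j < d3)%N -> i != j -> bf E (ket C d3 i) (ket C d3 j) = 0.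
Proof.
move=> Hi Hj ij.
case: (posnP i) => [i0|ip].
  subst i; case: (ltnP j d1) => jd; [apply: p3_BA|apply: p3_BG]; lia.
case: (posnP j) => [j0|jp].
  subst j; case: (ltnP i d1) => id; [apply: p3_AB|apply: p3_GB]; lia.
case: (ltnP i d1) => id; case: (ltnP j d1) => jd.
- apply: p3_AA => //; lia.
- apply: p3_AG; lia.
- apply: p3_GA; lia.
- apply: p3_GG => //; lia.
Qed.

Lemma p3_C i : (1 <= i <= d2.-1)%N ->
  bf E (ket C d3 i) (ket C d3 i) = bf E (ket C d3 0) (ket C d3 0).
Proof.
move=> Hi.
have HH : s2 C * (rn C d3 * bf E (ket C d3 0) (ket C d3 0) -
                  rn C d3 * bf E (ket C d3 i) (ket C d3 i)) = 0.
  move: (@H (6, 0)%N (2, i)%N ltac:(memtac) ltac:(memtac) ltac:(neqtac)).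
  prep; move/canc3 => /(_ ltac:(nz) ltac:(nz)).
  rewrite (@sum_single C d3 (fun k => bf E (ket C d3 k) (ket C d3 0)) 0%N);
    [|lia|by move=> k kd k0; apply: p3_off => //; lia].
  by rewrite (@sum_single C d3 (fun k => bf E (ket C d3 k) (ket C d3 i)) i);
    [|lia|by move=> k kd k0; apply: p3_off => //; lia].
move/eqP: HH; rewrite mulf_eq0 (negbTE (s2_neq0 C)) /= -mulrBr mulf_eq0 (negbTE (rn_neq0 C _)) /=; last lia.
by rewrite subr_eq0 => /eqP.
Qed.

Lemma p3_F i : (d2 <= i <= d3.-1)%N ->
  bf E (ket C d3 i) (ket C d3 i) = bf E (ket C d3 i.-1) (ket C d3 i.-1).
Proof.
move=> Hi.
have HH : s2 C * (rn C d3 * bf E (ket C d3 i.-1) (ket C d3 i.-1) -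
                  rn C d3 * bf E (ket C d3 i) (ket C d3 i)) = 0.
  move: (@H (6, 0)%N (4, i)%N ltac:(memtac) ltac:(memtac) ltac:(neqtac)).
  prep; move/canc3 => /(_ ltac:(nz) ltac:(nz));
  (rewrite (@sum_single C d3 (fun k => bf E (ket C d3 k) (ket C d3 i.-1)) i.-1);
    [|lia|by move=> k kd k0; apply: p3_off => //; lia]);
  by rewrite (@sum_single C d3 (fun k => bf E (ket C d3 k) (ket C d3 i)) i);
    [|lia|by move=> k kd k0; apply: p3_off => //; lia].
move/eqP: HH; rewrite mulf_eq0 (negbTE (s2_neq0 C)) /= -mulrBr mulf_eq0 (negbTE (rn_neq0 C _)) /=; last lia.
by rewrite subr_eq0 => /eqP.
Qed.

Lemma p3_diag i : (i < d3)%N -> bf E (ket C d3 i) (ket C d3 i) = bf E (ket C d3 0) (ket C d3 0).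
Proof.
elim: i => [//|i IH] Hi.
case: (ltnP i.+1 d2) => id; first by apply: p3_C; lia.
by rewrite p3_F /=; [apply: IH; lia | lia].
Qed.

Lemma p3_main : exists c : C, E = c%:M.
Proof.
exists (bf E (ket C d3 0) (ket C d3 0)); apply/matrixP => a b.
rewrite mxE -bf_entry; case: (eqVneq a b) => [<-|ab] /=.
  by rewrite mulr1n p3_diag.
rewrite mulr0n p3_off //; apply: contra ab => /eqP E'; apply/eqP/val_inj.
Qed.
End P3.


Theorem lemma4 (C : numClosedFieldType) (d1 d2 d3 : nat)
  (h1 : (3 <= d1)%N) (h12 : (d1 <= d2)%N) (h23 : (d2 <= d3)%N) :
  let S := lemma4_states C d1 d2 d3 in
  size S = (d2 + 2 * d3 - 2)%N /\
  pairwise_orth S /\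
  (forall E : 'M[C]_d1, psd E -> OP1 S E -> exists c : C, E = c%:M) /\
  (forall E : 'M[C]_d2, psd E -> OP2 S E -> exists c : C, E = c%:M) /\
  (forall E : 'M[C]_d3, psd E -> OP3 S E -> exists c : C, E = c%:M).
Proof.
move=> S; rewrite /S; split.
  rewrite S_eq size_map /T /rng !size_cat !size_map !size_iota /=; lia.
split; first by apply: orth_tags; apply: orth.
split.
  move=> E _ HOP; apply: (p1_main (d1:=d1) (d2:=d2) (d3:=d3)) => //.
  by move=> p q hp hq pq; exact: (@OP_tags C d1 d2 d3 (fun u v => inner3 u (act1 E v) = 0) HOP p q hp hq pq).
split.
  move=> E _ HOP; apply: (p2_main (d1:=d1) (d2:=d2) (d3:=d3)) => //.
  by move=> p q hp hq pq; exact: (@OP_tags C d1 d2 d3 (fun u v => inner3 u (act2 E v) = 0) HOP p q hp hq pq).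
move=> E _ HOP; apply: (p3_main (d1:=d1) (d2:=d2) (d3:=d3)) => //.
by move=> p q hp hq pq; exact: (@OP_tags C d1 d2 d3 (fun u v => inner3 u (act3 E v) = 0) HOP p q hp hq pq).
Qed.
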